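(* Let $(X,\leq)$ be a poset and $K$ a field, write $FI=FI(X,K)$ and $J=J(FI(X,K))$ (the Jacobson radical). For $k>0$ let $Z_k=\{\alpha\in FI\mid \alpha_{xy}=0 \text{ whenever } l(x,y)\leq k-1\}$. Then: (1) $FI^{(1)}\subseteq Z_1=J$; (2) $Z_mZ_n\subseteq Z_{m+n}$ for all $m,n>0$; (3) $\gamma_n(J)\subseteq Z_n$ for all $n>0$; (4) $FI^{(n)}\subseteq Z_{2^{n-1}}$ for all $n>0$; (5) $J^{(n)}\subseteq Z_{2^n}$ for all $n\geq0$.
   Context: $FI(X,K)$ is the finitary incidence algebra: the $K$-vector space of formal sums $\alpha=\sum_{x\leq y}\alpha_{xy}e_{xy}$ ($x,y\in X$, $\alpha_{xy}\in K$) such that for every pair $x<y$ only finitely many $x\leq u<v\leq y$ have $\alpha_{uv}\neq0$, with convolution product $\alpha\beta=\sum_{x\leq y}\big(\sum_{x\leq z\leq y}\alpha_{xz}\beta_{zy}\big)e_{xy}$. For $x\leq y$, $l(x,y)$ is the length of the interval $\{z\mid x\leq z\leq y\}$, i.e. the supremum of $|C|-1$ over finite chains $C$ in it. With $[a,b]=ab-ba$ and $UV$, $[U,V]$ the spans of products, commutators: $FI^{(0)}=FI$, $FI^{(n+1)}=[FI^{(n)},FI^{(n)}]FI$; $J^{(0)}=J$, $J^{(n+1)}=[J^{(n)},J^{(n)}]J$; $\gamma_1(J)=J$, $\gamma_{n+1}(J)=[\gamma_n(J),J]$. *)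

(* Defs.v *)
From HB Require Import structures.
From mathcomp Require Import all_boot all_order all_algebra.
From mathcomp Require Import boolp classical_sets functions cardinality fsbigop.
Set Implicit Arguments. Unset Strict Implicit. Unset Printing Implicit Defensive.
Import Order.TTheory GRing.Theory.
Local Open Scope classical_set_scope.
Local Open Scope ring_scope.

Section FI.
Variables (d : Order.disp_t) (X : porderType d) (K : fieldType).

(* raw matrices indexed by X, i.e. formal sums  sum a_xy e_xy *)
Definition mat := X -> X -> K.

Definition incidence (a : mat) : Prop :=
  forall x y : X, ~~ (x <= y)%O -> a x y = 0.

Definition finitary (a : mat) : Prop :=
  forall x y : X, (x < y)%O ->
    finite_set [set uv : X * X |
      [/\ (x <= uv.1)%O, (uv.1 < uv.2)%O, (uv.2 <= y)%O & a uv.1 uv.2 != 0]].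

Definition FI (a : mat) : Prop := incidence a /\ finitary a.

Definition mzero : mat := fun _ _ => 0.
Definition mone : mat := fun x y => if x == y then 1 else 0.
Definition madd (a b : mat) : mat := fun x y => a x y + b x y.
Definition mopp (a : mat) : mat := fun x y => - a x y.
Definition mscale (c : K) (a : mat) : mat := fun x y => c * a x y.
(* convolution product; for finitary a, the sum has finitely many
   nonzero terms, and \sum_(z \in A) is the finitely supported sum. *)
Definition mmul (a b : mat) : mat := fun x y =>
  \sum_(z \in [set z : X | (x <= z)%O /\ (z <= y)%O]) (a x z * b z y).
Definition mcomm (a b : mat) : mat := madd (mmul a b) (mopp (mmul b a)).

Definition Jac (a : mat) : Prop :=
  FI a /\ forall r, FI r ->
    exists s, FI s /\ mmul s (madd mone (mopp (mmul r a))) = mone.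

Inductive span (P : mat -> Prop) : mat -> Prop :=
  | span_in a : P a -> span P a
  | span0 : span P mzero
  | spanD a b : span P a -> span P b -> span P (madd a b)
  | spanZ c a : span P a -> span P (mscale c a).

Definition prodset (U V : mat -> Prop) : mat -> Prop :=
  span (fun a => exists u v, [/\ U u, V v & a = mmul u v]).
Definition commset (U V : mat -> Prop) : mat -> Prop :=
  span (fun a => exists u v, [/\ U u, V v & a = mcomm u v]).

Fixpoint FIder (n : nat) : mat -> Prop :=
  match n with
  | 0 => FI
  | m.+1 => prodset (commset (FIder m) (FIder m)) FI
  end.

Fixpoint Jder (n : nat) : mat -> Prop :=
  match n with
  | 0 => Jac
  | m.+1 => prodset (commset (Jder m) (Jder m)) Jac
  end.

(* gamma_n(J), n >= 1 (gamma 0 is a junk value equal to J) *)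
Fixpoint gamma (n : nat) : mat -> Prop :=
  match n with
  | 0 | 1 => Jac
  | (m.+1) as k => commset (gamma m) Jac
  end.

(* l(x,y) <= n : every finite chain in [x,y] has at most n+1 elements
   (finite chains = strictly increasing sequences) *)
Definition len_le (x y : X) (n : nat) : Prop :=
  forall s : seq X, sorted (fun u v => (u < v)%O) s ->
    all (fun z => (x <= z)%O && (z <= y)%O) s -> (size s <= n.+1)%N.

Definition Zk (k : nat) (a : mat) : Prop :=
  FI a /\ forall x y : X, (x <= y)%O -> len_le x y k.-1 -> a x y = 0.

Definition subset_of (P Q : mat -> Prop) : Prop := forall a, P a -> Q a.

End FI.

(* Main.v *)
Require Import Defs.
From HB Require Import structures.
From mathcomp Require Import all_boot all_order all_algebra.
From mathcomp Require Import boolp classical_sets functions cardinality fsbigop.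
From mathcomp Require Import finmap.
From mathcomp Require Import zify.
Set Implicit Arguments. Unset Strict Implicit. Unset Printing Implicit Defensive.
Import Order.TTheory GRing.Theory.
Local Open Scope classical_set_scope.
Local Open Scope ring_scope.

Section Chains.
Variables (d : Order.disp_t) (X : porderType d).

Definition lge (x y : X) (k : nat) : Prop :=
  exists s : seq X, [/\ sorted (fun u v => (u < v)%O) s,
    all (fun z => (x <= z)%O && (z <= y)%O) s & (k < size s)%N].

Lemma len_leE x y n : len_le x y n <-> ~ lge x y n.+1.
Proof.
split.
  by move=> H [s [s1 s2 s3]]; have := H s s1 s2; rewrite leqNgt s3.
move=> H s s1 s2; rewrite leqNgt; apply/negP => s3; apply: H; by exists s.
Qed.

Lemma lge_mono x y k k' : (k <= k')%N -> lge x y k' -> lge x y k.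
Proof. by move=> kk [s [s1 s2 s3]]; exists s; split=> //; exact: leq_ltn_trans s3. Qed.

Lemma lge0 x y : (x <= y)%O -> lge x y 0.
Proof. by move=> xy; exists [:: x]; split=> //=; rewrite lexx xy. Qed.

Lemma lge1 x y : (x < y)%O -> lge x y 1.
Proof.
move=> xy; exists [:: x; y]; split=> //=; rewrite ?andbT ?xy ?lexx ?(ltW xy) //.
Qed.

Lemma lge_le x y k : lge x y k -> (x <= y)%O.
Proof.
case=> s [_ + +]; case: s => [//|u s] /= /andP[/andP[xu uy] _] _.
exact: le_trans xu uy.
Qed.

Lemma lge_xx1 x : ~ lge x x 1.
Proof.
case=> s [+ + +]; case: s => [//|u [//|v s]] /= /andP[uv _] /and3P[/andP[xu ux] /andP[xv vx] _] _.
have eu : u = x by apply/eqP; rewrite eq_le xu ux.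
have ev : v = x by apply/eqP; rewrite eq_le xv vx.
by move: uv; rewrite eu ev ltxx.
Qed.

Lemma lge_cat x z y m n : lge x z m -> lge z y n -> lge x y (m + n).
Proof.
move=> [s1 [h1 a1 z1]] [s2 [h2 a2 z2]].
have xz : (x <= z)%O by apply: (lge_le (k:=m)); exists s1.
exists (filter (fun u => (u < z)%O) s1 ++ s2); split.
- have tr : transitive (fun u v : X => (u < v)%O) by move=> ? ? ? ; exact: lt_trans.
  rewrite sorted_pairwise // pairwise_cat -!sorted_pairwise // h2 (sorted_filter tr _ h1) !andbT.
  apply/allrelP => u v; rewrite mem_filter => /andP[uz _] vs2.
  move/allP: a2 => /(_ v vs2) /andP[zv _]; exact: lt_le_trans uz zv.
- rewrite all_cat; apply/andP; split.
    apply/allP => u; rewrite mem_filter => /andP[uz us1].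
    move/allP: a1 => /(_ u us1) /andP[xu zu]; rewrite xu /=.
    move/allP: a2 z2; case: s2 h2 => [//|w s2'] _ /(_ w (mem_head _ _)) /andP[zw wy] _.
    exact: le_trans (ltW uz) (le_trans zw wy).
  apply/allP => v vs2; move/allP: a2 => /(_ v vs2) /andP[zv vy].
  by rewrite vy (le_trans xz zv).
- rewrite size_cat.
  have cnt : (size s1 <= size (filter (fun u => (u < z)%O) s1) + 1)%N.
    rewrite size_filter -(count_predC (fun u => (u < z)%O) s1) leq_add2l.
    have u1 : uniq s1 by exact: lt_sorted_uniq.
    rewrite (@eq_in_count _ _ (pred1 z)).
      by rewrite count_uniq_mem // leq_b1.
    move=> u us1 /=; move/allP: a1 => /(_ u us1) /andP[_ uz].
    by rewrite lt_neqAle uz andbT negbK.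
  move: z1 z2 cnt; move: (size (filter (fun u => (u < z)%O) s1)) (size s1) (size s2) => a b c; lia.
Qed.

End Chains.
Section M.
Variables (d : Order.disp_t) (X : porderType d) (K : fieldType).
Local Notation M := (@mat d X K).

Definition pairs (a : M) (x y : X) : set (X * X) :=
  [set uv : X * X |
      [/\ (x <= uv.1)%O, (uv.1 < uv.2)%O, (uv.2 <= y)%O & a uv.1 uv.2 != 0]].

Lemma pairs_fin a x y : finitary a -> finite_set (pairs a x y).
Proof.
move=> fa; have [xy|nxy] := boolP (x < y)%O; first exact: fa.
suff -> : pairs a x y = set0 by exact: finite_set0.
apply/seteqP; split=> // -[u v] [/= xu uv vy _].
by move: nxy; rewrite (le_lt_trans xu (lt_le_trans uv vy)).
Qed.

Definition ends (a : M) x y : set X := fst @` pairs a x y `|` snd @` pairs a x y.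

Lemma ends_fin a x y : finitary a -> finite_set (ends a x y).
Proof.
move=> fa; rewrite finite_setU; split; apply: finite_image; exact: pairs_fin.
Qed.

Lemma endsL a x y u v : (x <= u)%O -> (u < v)%O -> (v <= y)%O -> a u v != 0 ->
  ends a x y u.
Proof. by move=> *; left; exists (u, v). Qed.

Lemma endsR a x y u v : (x <= u)%O -> (u < v)%O -> (v <= y)%O -> a u v != 0 ->
  ends a x y v.
Proof. by move=> *; right; exists (u, v). Qed.

Lemma fsum_neq0 (A : set X) (F : X -> K) :
  \sum_(z \in A) F z != 0 -> exists2 z, A z & F z != 0.
Proof.
move=> H; have [//|N] := pselect (exists2 z, A z & F z != 0).
move/eqP: H => H; exfalso; apply: H; apply: fsbig1 => z Az.
have [//|Fz] := eqVneq (F z) 0; by exfalso; apply: N; exists z.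
Qed.

Lemma mmul_ne0 (a b : M) x y : mmul a b x y != 0 ->
  exists z, [/\ (x <= z)%O, (z <= y)%O, a x z != 0 & b z y != 0].
Proof.
rewrite /mmul => /fsum_neq0 [z [xz zy]]; rewrite mulf_eq0 negb_or => /andP[h1 h2].
by exists z.
Qed.

Lemma mmul_inc (a b : M) : incidence (mmul a b).
Proof.
move=> x y nxy; apply/eqP; apply: contraNT nxy => /mmul_ne0 [z [xz zy _ _]].
exact: le_trans xz zy.
Qed.

Lemma FI_mul (a b : M) : FI a -> FI b -> FI (mmul a b).
Proof.
move=> [ia fa] [ib fb]; split; first exact: mmul_inc.
move=> x y xy.
pose E := ends a x y `|` ends b x y.
apply: (@sub_finite_set _ _ (E `*` E)).
  move=> [u v] [/= xu uv vy /mmul_ne0 [z [uz zv azn bzn]]]; split => /=.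
    have [ez|nez] := eqVneq u z.
      by right; subst z; apply: (endsL (v:=v)).
    by left; apply: (endsL (v:=z)) => //; [rewrite lt_neqAle nez uz | exact: le_trans zv vy].
  have [ez|nez] := eqVneq z v.
    by left; subst z; apply: (endsR (u:=u)).
  by right; apply: (endsR (u:=z)) => //; [exact: le_trans xu uz | rewrite lt_neqAle nez zv].
by apply: finite_setX; rewrite finite_setU; split; apply: ends_fin.
Qed.

Lemma FI_add (a b : M) : FI a -> FI b -> FI (madd a b).
Proof.
move=> [ia fa] [ib fb]; split.
  by move=> x y nxy; rewrite /madd ia // ib // addr0.
move=> x y xy; apply: (@sub_finite_set _ _ (pairs a x y `|` pairs b x y)).
  move=> [u v] [/= xu uv vy]; rewrite /madd => ne.
  have [az|anz] := eqVneq (a u v) 0.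
    by right; split => //; move: ne; rewrite az add0r.
  by left.
by rewrite finite_setU; split; apply: pairs_fin.
Qed.

Lemma FI_scale c (a : M) : FI a -> FI (mscale c a).
Proof.
move=> [ia fa]; split; first by move=> x y nxy; rewrite /mscale ia // mulr0.
move=> x y xy; apply: (@sub_finite_set _ _ (pairs a x y)); last exact: pairs_fin.
move=> [u v] [/= xu uv vy]; rewrite /mscale mulf_eq0 negb_or => /andP[_ ?].
by split.
Qed.

Lemma FI_opp (a : M) : FI a -> FI (mopp a).
Proof.
move=> [ia fa]; split; first by move=> x y nxy; rewrite /mopp ia // oppr0.
move=> x y xy; apply: (@sub_finite_set _ _ (pairs a x y)); last exact: pairs_fin.
move=> [u v] [/= xu uv vy]; rewrite /mopp oppr_eq0 => ?.
by split.
Qed.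

Lemma FI_zero : FI (@mzero d X K).
Proof.
split=> // x y xy; apply: (@sub_finite_set _ _ set0); last exact: finite_set0.
by move=> [u v] [/= _ _ _]; rewrite /mzero eqxx.
Qed.

Lemma FI_one : FI (@mone d X K).
Proof.
split.
  move=> x y nxy; rewrite /mone; case: eqP => // exy.
  by move: nxy; rewrite exy lexx.
move=> x y xy; apply: (@sub_finite_set _ _ set0); last exact: finite_set0.
move=> [u v] [/= _ uv _]; rewrite /mone (lt_eqF uv).
by rewrite eqxx.
Qed.


Definition Zv k (a : M) := forall x y, a x y != 0 -> lge x y k.
Definition ZZ k (a : M) := FI a /\ Zv k a.

Lemma FI_ZZ0 a : FI a -> ZZ 0 a.
Proof.
move=> [ia fa]; split => // x y ne; apply: lge0.
by apply: contraNT ne => nxy; rewrite ia.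
Qed.

Lemma ZZ_FI k a : ZZ k a -> FI a.
Proof. by case. Qed.

Lemma ZZ_mono k k' a : (k <= k')%N -> ZZ k' a -> ZZ k a.
Proof. by move=> kk [fa za]; split=> // x y /za; apply: lge_mono. Qed.

Lemma ZZ_add k a b : ZZ k a -> ZZ k b -> ZZ k (madd a b).
Proof.
move=> [fa za] [fb zb]; split; first exact: FI_add.
move=> x y; rewrite /madd; have [az|anz] := eqVneq (a x y) 0.
  by rewrite az add0r; apply: zb.
by move=> _; apply: za.
Qed.

Lemma ZZ_scale k c a : ZZ k a -> ZZ k (mscale c a).
Proof.
move=> [fa za]; split; first exact: FI_scale.
by move=> x y; rewrite /mscale mulf_eq0 negb_or => /andP[_ /za].
Qed.

Lemma ZZ_opp k a : ZZ k a -> ZZ k (mopp a).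
Proof.
move=> [fa za]; split; first exact: FI_opp.
by move=> x y; rewrite /mopp oppr_eq0 => /za.
Qed.

Lemma ZZ_zero k : ZZ k (@mzero d X K).
Proof. by split; [exact: FI_zero | move=> x y; rewrite /mzero eqxx]. Qed.

Lemma ZZ_mul m n a b : ZZ m a -> ZZ n b -> ZZ (m + n) (mmul a b).
Proof.
move=> [fa za] [fb zb]; split; first exact: FI_mul.
move=> x y /mmul_ne0 [z [xz zy /za h1 /zb h2]]; exact: lge_cat h1 h2.
Qed.

Lemma ZZ_comm m n a b : ZZ m a -> ZZ n b -> ZZ (m + n) (mcomm a b).
Proof.
move=> ha hb; apply: ZZ_add; first exact: ZZ_mul.
by apply: ZZ_opp; rewrite addnC; apply: ZZ_mul.
Qed.

Lemma ZZ_span k (P : M -> Prop) a : (forall b, P b -> ZZ k b) -> Defs.span P a -> ZZ k a.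
Proof.
move=> H; elim=> {a} [a /H //| |a b _ ha _ hb|c a _ ha].
- exact: ZZ_zero.
- exact: ZZ_add.
- exact: ZZ_scale.
Qed.

Lemma ZZ_prodset m n (U V : M -> Prop) a :
  (forall u, U u -> ZZ m u) -> (forall v, V v -> ZZ n v) ->
  prodset U V a -> ZZ (m + n) a.
Proof.
move=> hU hV; apply: ZZ_span => b [u [v [Uu Vv ->]]]; apply: ZZ_mul; auto.
Qed.

Lemma ZZ_commset m n (U V : M -> Prop) a :
  (forall u, U u -> ZZ m u) -> (forall v, V v -> ZZ n v) ->
  commset U V a -> ZZ (m + n) a.
Proof.
move=> hU hV; apply: ZZ_span => b [u [v [Uu Vv ->]]]; apply: ZZ_comm; auto.
Qed.

Lemma Zk_ZZ k a : (0 < k)%N -> Zk k a <-> ZZ k a.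
Proof.
case: k => // k _; split.
  move=> [fa za]; split=> // x y ne.
  have xy : (x <= y)%O by apply: contraNT ne => nxy; rewrite fa.1.
  have [//|nl] := pselect (lge x y k.+1).
  by move: ne; rewrite za ?eqxx // len_leE.
move=> [fa za]; split=> // x y xy; rewrite len_leE => nl.
have [//|ne] := eqVneq (a x y) 0.
by exfalso; apply: nl; apply: za.
Qed.

Lemma diag_mul (a b : M) x : mmul a b x x = a x x * b x x.
Proof.
rewrite /mmul (@eq_fsbigl _ _ _ _ _ _ [set x]) ?fsbig_set1 //.
apply/seteqP; split=> [z [xz zx]|z ->]; last by split.
by apply/eqP; rewrite eq_le zx xz.
Qed.

Lemma comm_FI a b : FI a -> FI b -> ZZ 1 (mcomm a b).
Proof.
move=> fa fb; split; first by apply: FI_add; [exact: FI_mul | apply: FI_opp; exact: FI_mul].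
move=> x y ne.
have xy : (x <= y)%O by apply: contraNT ne => nxy; rewrite /mcomm (FI_add (FI_mul fa fb) (FI_opp (FI_mul fb fa))).1.
have [exy|nxy] := eqVneq x y.
  by move: ne; rewrite exy /mcomm /madd /mopp !diag_mul mulrC subrr eqxx.
by apply: lge1; rewrite lt_neqAle nxy.
Qed.


Section Inv.
Variable b : M.
Hypothesis fb : FI b.
Hypothesis b0 : forall z, b z z = 0.

Fixpoint pw n : M := match n with 0 => @mone d X K | n'.+1 => mmul (pw n') b end.

Definition NN x y := #|` fset_set (pairs b x y)|%fset.

Lemma blt z y : b z y != 0 -> (z < y)%O.
Proof.
move=> ne; rewrite lt_neqAle; apply/andP; split.
  by apply: contraNneq ne => ->; rewrite b0.
by apply: contraNT ne => nzy; rewrite fb.1.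
Qed.

Lemma NN_le x z y : (z <= y)%O -> (NN x z <= NN x y)%N.
Proof.
move=> zy; apply: fsubset_leq_card; rewrite -fset_set_sub; try exact: pairs_fin fb.2.
by move=> [u v] [/= xu uv vz ne]; split => //; exact: le_trans vz zy.
Qed.

Lemma NN_lt x z y : (x <= z)%O -> b z y != 0 -> (NN x z < NN x y)%N.
Proof.
move=> xz ne; have zy := blt ne.
apply: fproper_ltn_card; rewrite fproperEneq; apply/andP; split.
  apply/eqP => E.
  have : (z, y) \in fset_set (pairs b x y).
    by rewrite in_fset_set; [apply/mem_set; split => //= | exact: pairs_fin fb.2].
  rewrite -E in_fset_set; last exact: pairs_fin fb.2.
  by move=> /set_mem -[/= _ zy' yz _]; move: (lt_le_trans zy' yz); rewrite ltxx.
rewrite -fset_set_sub; try exact: pairs_fin fb.2.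
by move=> [u v] [/= xu uv vz ne']; split => //; exact: le_trans vz (ltW zy).
Qed.

Lemma pw_van n x y : pw n x y != 0 -> (n <= NN x y)%N.
Proof.
elim: n x y => // n IH x y /= /mmul_ne0 [z [xz zy /IH h bz]].
exact: leq_ltn_trans h (NN_lt xz bz).
Qed.

Lemma pw_first n u v : pw n.+1 u v != 0 ->
  exists w, [/\ (u < w)%O, (w <= v)%O & b u w != 0].
Proof.
elim: n u v => [|n IH] u v /= /mmul_ne0 [z [uz zv h bz]].
  have [euz|nuz] := eqVneq u z; last by rewrite /mone (negbTE nuz) eqxx in h.
  subst z.
  by exists v; split => //; exact: blt.
have [w [uw wz bw]] := IH _ _ h.
by exists w; split => //; exact: le_trans wz zv.
Qed.

Lemma pw_last n u v : pw n.+1 u v != 0 ->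
  exists z, [/\ (u <= z)%O, (z < v)%O & b z v != 0].
Proof.
move=> /= /mmul_ne0 [z [uz zv h bz]]; exists z; split => //; exact: blt.
Qed.

Lemma pw_inc n : incidence (pw n).
Proof.
case: n => [|n] x y nxy /=; last exact: mmul_inc.
by rewrite FI_one.1.
Qed.

Definition sinv : M := fun x y => \sum_(n < (NN x y).+1) pw n x y.

Lemma sum_ord_ne0 m (F : nat -> K) : \sum_(n < m) F n != 0 -> exists n, F n != 0.
Proof.
move=> H; have [//|N] := pselect (exists n, F n != 0).
move/eqP: H => H; exfalso; apply: H; apply: big1 => i _.
have [//|Fz] := eqVneq (F i) 0; by exfalso; apply: N; exists i.
Qed.

Lemma FI_sinv : FI sinv.
Proof.
split.
  by move=> x y nxy; apply: big1 => i _; rewrite pw_inc.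
move=> x y xy; pose E := ends b x y.
apply: (@sub_finite_set _ _ (E `*` E)); last by apply: finite_setX; exact: ends_fin fb.2.
move=> [u v] [/= xu uv vy]; rewrite /sinv => /(@sum_ord_ne0 _ (fun n => pw n u v)) [[|n] h].
  by move: h; rewrite /= /mone (lt_eqF uv) eqxx.
have [w [uw wv bw]] := pw_first h.
have [z [uz zv bz]] := pw_last h.
split => /=.
  by apply: (endsL (v:=w)) => //; exact: le_trans wv vy.
by apply: (endsR (u:=z)) => //; exact: le_trans xu uz.
Qed.

Lemma sinv_ext m x z : (NN x z < m)%N -> \sum_(n < m) pw n x z = sinv x z.
Proof.
elim: m => // m IH; rewrite ltnS leq_eqVlt => /orP[/eqP <- //|lt].
rewrite big_ord_recr /= IH //.
have [->|ne] := eqVneq (pw m x z) 0; first by rewrite addr0.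
by move: (pw_van ne); rewrite leqNgt lt.
Qed.

Lemma sinv_left : mmul sinv (madd (@mone d X K) (mopp b)) = @mone d X K.
Proof.
apply/funext => x; apply/funext => y.
have [xy|nxy] := boolP (x <= y)%O; last by rewrite mmul_inc // FI_one.1.
pose S := [set z | (x <= z)%O /\ (z <= y)%O] `&` ([set y] `|` ends b x y).
have Sfin : finite_set S.
  by apply: finite_setIr; rewrite finite_setU; split; [exact: finite_set1 | exact: ends_fin fb.2].
have key : forall F : X -> K,
    (forall z, (x <= z)%O -> (z <= y)%O -> z != y -> b z y = 0 -> F z = 0) ->
   \sum_(z \in [set z | (x <= z)%O /\ (z <= y)%O]) F z = \sum_(z <- fset_set S) F z.
  move=> F HF; rewrite -(fsbig_finite _ _ Sfin); apply/esym/fsbig_widen.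
    by move=> z [].
  move=> z [[xz zy] nS]; rewrite /preimage /=; apply: HF => //.
    by apply/eqP => ezy; apply: nS; split => //; left.
  have [//|bz] := eqVneq (b z y) 0.
  by exfalso; apply: nS; split => //; right; apply: (endsL (v:=y)) => //; exact: blt.
have zLy : forall z, z \in fset_set S -> (z <= y)%O.
  by move=> z; rewrite in_fset_set // => /set_mem [[_ zy] _].
have yL : y \in fset_set S.
  by rewrite in_fset_set //; apply/mem_set; split; [split => // | left].
have uL : uniq (fset_set S) by exact: fset_uniq.
rewrite /mmul key; last first.
  by move=> z _ _ nzy bz; rewrite /madd /mopp /mone (negbTE nzy) bz oppr0 addr0 mulr0.
under eq_bigr do rewrite /madd /mopp mulrDr mulrN.
rewrite big_split /= sumrN.
have first : \sum_(z <- fset_set S) sinv x z * @mone d X K z y = sinv x y.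
  rewrite (bigD1_seq y) //= /mone eqxx mulr1 big1 ?addr0 //.
  by move=> z nzy; rewrite (negbTE nzy) mulr0.
have second : \sum_(z <- fset_set S) sinv x z * b z y
    = \sum_(n < (NN x y).+1) pw n.+1 x y.
  transitivity (\sum_(z <- fset_set S) \sum_(n < (NN x y).+1) pw n x z * b z y).
    apply: eq_big_seq => z zL; rewrite -mulr_suml.
    have [->|bz] := eqVneq (b z y) 0; first by rewrite !mulr0.
    by rewrite sinv_ext // ltnS; apply: NN_le; apply: zLy.
  rewrite exchange_big /=; apply: eq_bigr => n _.
  by rewrite /= /mmul key // => z _ _ _ ->; rewrite mulr0.
rewrite first second /sinv big_ord_recl [X in _ - X]big_ord_recr /=.
have P0 : mmul (pw (NN x y)) b x y = 0.
  have [//|ne] := eqVneq (pw (NN x y).+1 x y) 0.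
  by move: (pw_van ne); rewrite ltnn.
rewrite P0; under eq_bigr do rewrite add0n.
by rewrite addr0 addrK.
Qed.

End Inv.


Lemma Jac_ZZ1 a : Jac a -> ZZ 1 a.
Proof.
move=> [fa H]; split=> // x y ne.
have xy : (x <= y)%O by apply: contraNT ne => nxy; rewrite fa.1.
have [exy|nxy] := eqVneq x y; last by apply: lge1; rewrite lt_neqAle nxy.
subst y; exfalso.
have [s [fs E]] := H (mscale (a x x)^-1 (@mone d X K)) (FI_scale _ FI_one).
have := congr1 (fun f => f x x) E.
rewrite /= diag_mul /madd /mopp diag_mul /mscale /mone eqxx mulr1 mulVf // subrr mulr0.
by move=> /esym/eqP; rewrite oner_eq0.
Qed.

Lemma ZZ1_Jac a : ZZ 1 a -> Jac a.
Proof.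
move=> [fa za]; split => // r fr.
have a0 : forall z, a z z = 0.
  move=> z; have [//|ne] := eqVneq (a z z) 0.
  by exfalso; apply: (@lge_xx1 _ _ z); apply: za.
have fb : FI (mmul r a) by exact: FI_mul.
have b0 : forall z, mmul r a z z = 0 by move=> z; rewrite diag_mul a0 mulr0.
exists (sinv (mmul r a)); split; [exact: FI_sinv fb b0 | exact: sinv_left fb b0].
Qed.

End M.

Local Close Scope ring_scope.
Local Close Scope classical_set_scope.

Theorem lemma1p2 (d : Order.disp_t) (X : porderType d) (K : fieldType) :
  [/\ subset_of (@FIder d X K 1) (@Zk d X K 1)
        /\ (forall a, @Zk d X K 1 a <-> @Jac d X K a),
      (forall m n : nat, (0 < m)%N -> (0 < n)%N ->
         subset_of (@prodset d X K (@Zk d X K m) (@Zk d X K n)) (@Zk d X K (m + n))),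
      (forall n : nat, (0 < n)%N -> subset_of (@gamma d X K n) (@Zk d X K n)),
      (forall n : nat, (0 < n)%N ->
         subset_of (@FIder d X K n) (@Zk d X K (2 ^ n.-1)))
    & (forall n : nat, subset_of (@Jder d X K n) (@Zk d X K (2 ^ n)))].
Proof.
have F1 : forall a, @FIder d X K 1 a -> ZZ 1 a.
  move=> a H; apply: (ZZ_prodset (m:=1) (n:=0) _ _ H).
    by move=> u; apply: ZZ_span => b [u' [v [fu fv ->]]]; exact: comm_FI.
  by move=> v; exact: FI_ZZ0.
have ZK : forall k a, (0 < k)%N -> ZZ k a -> @Zk d X K k a.
  by move=> k a k0 h; apply/Zk_ZZ.
split.
- split; first by move=> a /F1; apply: ZK.
  move=> a; rewrite Zk_ZZ //; split; [exact: ZZ1_Jac | exact: Jac_ZZ1].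
- move=> m n m0 n0 a H; apply: ZK; first by rewrite addn_gt0 m0.
  by apply: ZZ_prodset H => u /Zk_ZZ; auto.
- move=> n n0 a H; apply: ZK => //.
  elim: n n0 a H => // -[|n] IH _ a H; first exact: Jac_ZZ1.
  have := ZZ_commset (m:=n.+1) (n:=1) (IH isT) (@Jac_ZZ1 _ _ _) H.
  by rewrite addn1.
- move=> n n0 a H; apply: ZK; first by rewrite expn_gt0.
  elim: n n0 a H => // -[|n] IH _ a H; first exact: F1.
  have h := ZZ_prodset (m:= 2 ^ n + 2 ^ n) (n:=0)
    (fun u => ZZ_commset (IH isT) (IH isT) (a:=u)) (@FI_ZZ0 _ _ _) H.
  by apply: ZZ_mono h; rewrite /= expnS mul2n -addnn addn0.
- move=> n a H; apply: ZK; first by rewrite expn_gt0.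
  elim: n a H => [|n IH] a H; first exact: Jac_ZZ1.
  have h := ZZ_prodset (m:= 2 ^ n + 2 ^ n) (n:=1)
    (fun u => ZZ_commset IH IH (a:=u)) (@Jac_ZZ1 _ _ _) H.
  by apply: ZZ_mono h; rewrite expnS mul2n -addnn leq_addr.
Qed.
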